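(* Let $\mathfrak g$ be a finite-dimensional two-step solvable Lie algebra over a field of characteristic zero with $\mathfrak g^\infty=\mathfrak g^3$. Then $\mathfrak g$ admits an LR-structure.
   Context: Two-step solvable means $[[\mathfrak g,\mathfrak g],[\mathfrak g,\mathfrak g]]=0$. Lower central series: $\mathfrak g^1=\mathfrak g$, $\mathfrak g^{i+1}=[\mathfrak g,\mathfrak g^i]$, $\mathfrak g^\infty=\bigcap_i\mathfrak g^i$. An LR-structure on a Lie algebra $\mathfrak g$ is a bilinear product $\cdot$ on its underlying space with $x\cdot(y\cdot z)=y\cdot(x\cdot z)$, $(x\cdot y)\cdot z=(x\cdot z)\cdot y$ and $x\cdot y-y\cdot x=[x,y]$ for all $x,y,z$. *)

(* Defs.v *)
From HB Require Import structures.
From mathcomp Require Import all_boot all_order all_algebra.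
Set Implicit Arguments. Unset Strict Implicit. Unset Printing Implicit Defensive.
Import GRing.Theory.
Local Open Scope ring_scope.

Section Lie.
Variables (K : fieldType) (V : vectType K).

Definition bilinear_map (f : V -> V -> V) : Prop :=
  (forall (a : K) (x y z : V), f (a *: x + y) z = a *: f x z + f y z) /\
  (forall (a : K) (x y z : V), f x (a *: y + z) = a *: f x y + f x z).

Definition is_lie_bracket (br : V -> V -> V) : Prop :=
  [/\ bilinear_map br,
      (forall x, br x x = 0) &
      (forall x y z, br x (br y z) + br y (br z x) + br z (br x y) = 0)].

(* [A, B] : the subspace spanned by all brackets [a, b], a in A, b in B
   (by bilinearity, spanned by brackets of basis vectors) *)
Definition lie_sp (br : V -> V -> V) (A B : {vspace V}) : {vspace V} :=
  (<<[seq br x y | x <- (vbasis A : seq V), y <- (vbasis B : seq V)]>>)%VS.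

Fixpoint lcs0 (br : V -> V -> V) (n : nat) : {vspace V} :=
  match n with
  | 0 => fullv
  | n'.+1 => lie_sp br fullv (lcs0 br n')
  end.

(* lower central series with the paper's indexing: g^1 = g, g^(i+1) = [g, g^i] *)
Definition lcs (br : V -> V -> V) (i : nat) : {vspace V} := lcs0 br i.-1.

Definition lcs_inf_is (br : V -> V -> V) (W : {vspace V}) : Prop :=
  forall v : V, v \in W <-> (forall i : nat, (0 < i)%N -> v \in lcs br i).

Definition two_step_solvable (br : V -> V -> V) : Prop :=
  lie_sp br (lie_sp br fullv fullv) (lie_sp br fullv fullv) = 0%VS.

Definition LR_structure (br : V -> V -> V) (p : V -> V -> V) : Prop :=
  [/\ bilinear_map p,
      (forall x y z, p x (p y z) = p y (p x z)),
      (forall x y z, p (p x y) z = p (p x z) y) &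
      (forall x y, p x y - p y x = br x y)].

End Lie.

(* Main.v *)
Require Import Defs.
From HB Require Import structures.
From mathcomp Require Import all_boot all_order all_algebra.
Import GRing.Theory.
Local Open Scope ring_scope.
Set Implicit Arguments. Unset Strict Implicit. Unset Printing Implicit Defensive.

Definition wrapf (K : fieldType) (V : vectType K) (f : V -> V) (H : forall (a : K) x y, f (a *: x + y) = a *: f x + f y) : V -> V := f.
Section Wrap.
Variables (K : fieldType) (V : vectType K) (f : V -> V).
Hypothesis Hf : forall (a : K) x y, f (a *: x + y) = a *: f x + f y.
Lemma wrapf_lin : linear (wrapf Hf).
Proof. by move=> a x y; apply: Hf. Qed.
HB.instance Definition _ := GRing.isLinear.Build K V V *:%R (wrapf Hf) wrapf_lin.
Definition mklf : 'End(V) := linfun (wrapf Hf).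
Lemma mklfE v : mklf v = f v.
Proof. by rewrite /mklf lfunE. Qed.
End Wrap.

Section LinAlg.
Variables (K : fieldType) (V : vectType K).
Implicit Types (T C : 'End(V)) (M N R : {vspace V}).

Definition pw T k : 'End(V) := iter k (fun g => T \o g)%VF \1%VF.

Lemma pwE T k v : pw T k v = iter k T v.
Proof. by elim: k v => [|k IH] v /=; rewrite ?id_lfunE // comp_lfunE IH. Qed.

Lemma pwS T k : pw T k.+1 = (T \o pw T k)%VF.
Proof. by []. Qed.

Lemma pwSr T k : pw T k.+1 = (pw T k \o T)%VF.
Proof. by apply/lfunP => v; rewrite comp_lfunE !pwE iterSr. Qed.

Lemma pw_stable T M k : (T @: M <= M)%VS -> (pw T k @: M <= M)%VS.
Proof.
move=> sTM; elim: k => [|k IH]; first by apply/subvP=> _ /memv_imgP[u Mu ->]; rewrite id_lfunE.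
by rewrite pwSr limg_comp (subv_trans _ IH) // limgS.
Qed.

Lemma comm_pw T C M k : (T @: M <= M)%VS ->
  (forall m, m \in M -> C (T m) = T (C m)) ->
  forall m, m \in M -> C (pw T k m) = pw T k (C m).
Proof.
move=> sTM cCT; elim: k => [|k IH] m Mm; first by rewrite !id_lfunE.
rewrite pwSr !comp_lfunE IH ?cCT //.
by rewrite (subvP sTM) // memv_img.
Qed.

Lemma inj_on T R : (T @: R)%VS = R -> forall x y, x \in R -> y \in R -> T x = T y -> x = y.
Proof.
move=> eTR x y Rx Ry eT.
have d0: \dim (R :&: lker T) = 0%N.
  by have := limg_ker_dim T R; rewrite eTR => /eqP; rewrite -{2}[\dim R]add0n eqn_add2r => /eqP.
have: x - y \in (R :&: lker T)%VS by rewrite memv_cap memvB //= memv_ker linearB /= eT subrr.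
move/eqP: d0; rewrite dimv_eq0 => /eqP ->; rewrite memv0 subr_eq0 => /eqP //.
Qed.

Lemma dpi_other N R v : (N :&: R = 0)%VS -> v \in R -> daddv_pi N R v = 0.
Proof.
move=> dNR Rv; have H := daddv_pi_add dNR (memv_add (mem0v N) Rv).
have dRN : (R :&: N = 0)%VS by rewrite capvC.
rewrite add0r (daddv_pi_id dRN Rv) in H.
by move/(canRL (addrK v)): H; rewrite subrr.
Qed.

Lemma pi_comm N R C m : (N :&: R = 0)%VS -> (C @: N <= N)%VS -> (C @: R <= R)%VS ->
  m \in (N + R)%VS -> daddv_pi N R (C m) = C (daddv_pi N R m).
Proof.
move=> dNR sN sR /memv_addP[a Na [b Rb ->]].
rewrite !linearD /= (daddv_pi_id dNR Na) (dpi_other dNR Rb) linear0 addr0.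
rewrite (daddv_pi_id dNR) ?(dpi_other dNR) ?addr0 //; last by rewrite (subvP sN) // memv_img.
by rewrite (subvP sR) // memv_img.
Qed.


Section Fit.
Variables (T : 'End(V)) (M : {vspace V}).
Hypothesis sTM : (T @: M <= M)%VS.
Let Mj j := (pw T j @: M)%VS.

Lemma MjS j : Mj j.+1 = (T @: Mj j)%VS.
Proof. by rewrite /Mj pwS limg_comp. Qed.

Lemma Mj_dec j : (Mj j.+1 <= Mj j)%VS.
Proof. by rewrite /Mj pwSr limg_comp limgS. Qed.

Lemma stab_ge j : Mj j.+1 = Mj j -> forall i, (j <= i)%N -> Mj i.+1 = Mj i.
Proof.
move=> ej; elim=> [|i IH]; first by rewrite leqn0 => /eqP <-.
rewrite leq_eqVlt => /orP[/eqP <- //|]; rewrite ltnS => /IH eI.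
by rewrite MjS eI -MjS.
Qed.

Lemma dim_bound j : (forall i, (i < j)%N -> Mj i.+1 != Mj i) -> (\dim (Mj j) + j <= \dim M)%N.
Proof.
elim: j => [|j IH] H; first by rewrite addn0 /Mj lim1g.
have := IH (fun i lt => H i (ltnW lt)).
have := ltn_leqif (dimv_leqif_eq (Mj_dec j)); rewrite H // => lt.
by rewrite addnS; apply: leq_trans; rewrite ltn_add2r lt.
Qed.

Lemma Mj_stable : Mj (\dim M).+1 = Mj (\dim M).
Proof.
case: (altP (Mj (\dim M).+1 =P Mj (\dim M))) => // neq.
have H : forall i, (i < (\dim M).+1)%N -> Mj i.+1 != Mj i.
  move=> i; rewrite ltnS => le; apply/eqP => ei.
  by move/negP: neq; apply; apply/eqP; apply: stab_ge ei _ le.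
by have := dim_bound H; rewrite addnS ltnNge leq_addl.
Qed.

Lemma fitting : let P := pw T (\dim M) in
  [/\ ((M :&: lker P) :&: (P @: M) = 0)%VS, ((M :&: lker P) + (P @: M) = M)%VS
   & (T @: (P @: M) = P @: M)%VS].
Proof.
move=> P.
have eR : (T @: (P @: M) = P @: M)%VS by rewrite -[RHS]Mj_stable MjS.
have pR : forall k, (pw T k @: (P @: M) = P @: M)%VS.
  by elim=> [|k IH]; rewrite ?lim1g // pwS limg_comp IH eR.
have dNR : ((M :&: lker P) :&: (P @: M) = 0)%VS.
  apply/eqP; rewrite -subv0; apply/subvP => v; rewrite !memv_cap memv_ker => /andP[/andP[_ /eqP Pv] Rv].
  have := @inj_on _ _ (pR (\dim M)) v 0 Rv (mem0v _); rewrite Pv linear0 => ->; by rewrite ?mem0v.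
split => //; apply/eqP; rewrite eqEdim; apply/andP; split.
  by rewrite subv_add capvSl pw_stable.
by rewrite dimv_disjoint_sum // limg_ker_dim.
Qed.
End Fit.


Lemma inv_on T R : (T @: R)%VS = R -> exists U : 'End(V),
  [/\ forall r, r \in R -> U r \in R, forall r, r \in R -> T (U r) = r &
      forall C r, (C @: R <= R)%VS -> (forall x, x \in R -> C (T x) = T (C x)) ->
        r \in R -> U (C r) = C (U r)].
Proof.
move=> eR.
pose F := (T \o projv R + (\1 - projv R))%VF.
have FE v : F v = T (projv R v) + (v - projv R v).
  by rewrite /F add_lfunE comp_lfunE add_lfunE opp_lfunE id_lfunE.
have kF : lker F == 0%VS.
  rewrite -subv0; apply/subvP => v; rewrite memv_ker memv0 FE => /eqP Fv0.
  have aR : T (projv R v) \in R by rewrite -{2}eR memv_img // memv_proj.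
  have bC := memv_projC R v.
  have a0 : T (projv R v) = 0.
    apply/eqP; rewrite -memv0 -(capv_compl R) memv_cap aR /=.
    have -> : T (projv R v) = - (v - projv R v) by apply/eqP; rewrite -addr_eq0 Fv0.
    by rewrite memvN.
  rewrite a0 add0r in Fv0.
  have ev : v = projv R v by apply/eqP; rewrite -subr_eq0 Fv0.
  have Rv : v \in R by rewrite ev memv_proj.
  apply/eqP; apply: (inj_on eR Rv (mem0v _)).
  by rewrite {1}ev a0 linear0.
have UP r : r \in R -> exists2 r0, r0 \in R & (F^-1)%VF r = r0 /\ T r0 = r.
  rewrite -{1}eR => /memv_imgP[r0 Rr0 ->]; exists r0 => //; split => //.
  have -> : T r0 = F r0 by rewrite FE projv_id // subrr addr0.
  by rewrite (lker0_lfunK kF).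
exists (F^-1)%VF; split.
- by move=> r /UP[r0 ? [-> _]].
- by move=> r /UP[r0 ? [-> ->]].
move=> C r sC cC Rr.
have CR x : x \in R -> C x \in R by move=> Rx; rewrite (subvP sC) // memv_img.
have [r0 Rr0 [Ur Tr0]] := UP r Rr.
have [r1 Rr1 [Ur1 Tr1]] := UP _ (CR _ Rr).
rewrite Ur Ur1; apply: (inj_on eR) => //; first by apply: CR.
by rewrite Tr1 -cC // Tr0.
Qed.


Lemma KL n : forall (T : nat -> 'End(V)) (Q : 'End(V) -> Prop) (M : {vspace V}),
  (forall C, Q C -> (C @: M <= M)%VS /\
     (forall i m, (i < n)%N -> m \in M -> C (T i m) = T i (C m))) ->
  (forall i, (i < n)%N -> Q (T i)) ->
  (M <= \sum_(i < n) (T i @: M))%VS ->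
  exists S : nat -> 'End(V), [/\ forall i, (i < n)%N -> (S i @: M <= M)%VS,
     forall i C m, (i < n)%N -> Q C -> m \in M -> S i (C m) = C (S i m) &
     forall m, m \in M -> \sum_(i < n) T i (S i m) = m].
Proof.
elim: n => [|n IH] T Q M HQ HT HM.
  exists (fun _ => 0); split => // m Mm; rewrite big_ord0.
  by have := subvP HM m Mm; rewrite big_ord0 memv0 => /eqP ->.
have [sTn cTn] := HQ _ (HT n (ltnSn n)).
have [dNR eNR eR] := fitting sTn.
set P := pw (T n) (\dim M) in dNR eNR eR.
set N := (M :&: lker P)%VS in dNR eNR eR.
set R := (P @: M)%VS in dNR eNR eR.
have NM : (N <= M)%VS by apply: capvSl.
have RM : (R <= M)%VS by apply: pw_stable.
have inv C : Q C -> (C @: N <= N)%VS /\ (C @: R <= R)%VS.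
  move=> QC; have [sC cC] := HQ C QC.
  have cCn m : m \in M -> C (T n m) = T n (C m) by move=> Mm; apply: cC.
  have cP := @comm_pw (T n) C M (\dim M) sTn cCn.
  split; apply/subvP => _ /memv_imgP[u Nu ->].
    move: Nu; rewrite !memv_cap !memv_ker => /andP[Mu /eqP Pu].
    rewrite (subvP sC) ?memv_img //= -cP // Pu linear0 //.
  move/memv_imgP: Nu => [w Mw ->]; rewrite cP //.
  by apply: memv_img; rewrite (subvP sC) ?memv_img.
have MNR m : m \in M -> m \in (N + R)%VS by rewrite eNR.
have dRN : (R :&: N = 0)%VS by rewrite capvC.
have piNc C m : Q C -> m \in M -> daddv_pi N R (C m) = C (daddv_pi N R m).
  by move=> QC Mm; have [??] := inv C QC; apply: pi_comm => //; apply: MNR.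
have piRc C m : Q C -> m \in M -> daddv_pi R N (C m) = C (daddv_pi R N m).
  by move=> QC Mm; have [??] := inv C QC; apply: pi_comm => //; rewrite addvC; apply: MNR.
set J := (\sum_(i < n) (T i @: N))%VS.
have TJ : (T n @: J <= J)%VS.
  rewrite limg_sum; apply/subv_sumP => i _.
  rewrite /J; apply: (sumv_sup i) => //.
  rewrite -limg_comp (eq_in_limg (g := (T i \o T n)%VF)).
    by rewrite limg_comp limgS // (inv _ (HT n (ltnSn n))).1.
  move=> x Nx; rewrite !comp_lfunE cTn //; first exact: leqW (ltn_ord i).
  exact: (subvP NM).
have stepA : (N <= T n @: N + J)%VS.
  apply/subvP => m Nm; have Mm := subvP NM m Nm.
  move/memv_sumP: (subvP HM m Mm) => [vs Hvs em].
  rewrite -(daddv_pi_id dNR Nm) em linear_sum /=.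
  have : \sum_(i < n.+1) daddv_pi N R (vs i) \in (\sum_(i < n.+1) (T i @: N))%VS.
    apply: memv_sumr => i _; have := Hvs i isT => /memv_imgP[w Mw ->].
    rewrite piNc //; first (by apply: memv_img; apply: memv_pi); exact: HT.
  by rewrite [in X in _ \in X -> _]big_ord_recr /= addvC.
have stepB j m : m \in N -> exists2 u, u \in N & m - pw (T n) j u \in J.
  move=> Nm; elim: j => [|j [u Nu Hu]].
    by exists m => //; rewrite id_lfunE subrr mem0v.
  have := subvP stepA u Nu => /memv_addP[a /memv_imgP[u' Nu' ->] [b Jb eu]].
  exists u' => //.
  have -> : m - pw (T n) j.+1 u' = (m - pw (T n) j u) + pw (T n) j b.
    by rewrite eu linearD pwSr comp_lfunE /= opprD addrA subrK.
  by rewrite memvD // (subvP (pw_stable j TJ)) // memv_img.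
have HN : (N <= J)%VS.
  apply/subvP => m Nm; have [u Nu] := stepB (\dim M) m Nm.
  by move: Nu; rewrite memv_cap memv_ker => /andP[_ /eqP ->]; rewrite subr0.
have [S' [S'1 S'2 S'3]] : exists S : nat -> 'End(V), [/\ forall i, (i < n)%N -> (S i @: N <= N)%VS,
     forall i C m, (i < n)%N -> Q C -> m \in N -> S i (C m) = C (S i m) &
     forall m, m \in N -> \sum_(i < n) T i (S i m) = m].
  apply: IH => //.
  - move=> C QC; split; first exact: (inv C QC).1.
    move=> i m lt Nm; apply: (HQ C QC).2; first exact: leqW.
    exact: (subvP NM).
  - by move=> i lt; apply: HT; apply: leqW.
have [U [U1 U2 U3]] := inv_on eR.
exists (fun i => if (i < n)%N then (S' i \o daddv_pi N R)%VF else (U \o daddv_pi R N)%VF).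
split.
- move=> i lt; apply/subvP => _ /memv_imgP[w _ ->]; case: ifP => lti; rewrite comp_lfunE.
    by apply: (subvP NM); rewrite (subvP (S'1 i lti)) // memv_img // memv_pi.
  by apply: (subvP RM); rewrite U1 // memv_pi.
- move=> i C m lt QC Mm; case: ifP => lti; rewrite !comp_lfunE.
    by rewrite piNc // S'2 // memv_pi.
  have [_ sR] := inv C QC.
  rewrite piRc // U3 // ?memv_pi // => x Rx.
  by apply: (HQ C QC).2 => //; apply: (subvP RM).
- move=> m Mm; rewrite big_ord_recr /= ltnn comp_lfunE U2 ?memv_pi //.
  rewrite (eq_bigr (fun i : 'I_n => T i (S' i (daddv_pi N R m)))); last first.
    by move=> i _; rewrite /= ltn_ord comp_lfunE.
  by rewrite S'3 ?memv_pi // daddv_pi_add // MNR.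
Qed.

End LinAlg.

Section LieMain.
Variables (K : fieldType) (V : vectType K) (br : V -> V -> V).
Hypothesis Hb1 : forall (a : K) x y z, br (a *: x + y) z = a *: br x z + br y z.
Hypothesis Hb2 : forall (a : K) x y z, br x (a *: y + z) = a *: br x y + br x z.
Hypothesis Halt : forall x, br x x = 0.
Hypothesis Hjac : forall x y z, br x (br y z) + br y (br z x) + br z (br x y) = 0.

Definition adl x : 'End(V) := @mklf K V (br x) (fun a u v => Hb2 a x u v).
Definition adr y : 'End(V) := @mklf K V (fun x => br x y) (fun a u v => Hb1 a u v y).
Lemma adlE x y : adl x y = br x y. Proof. exact: mklfE. Qed.
Lemma adrE x y : adr y x = br x y. Proof. exact: mklfE. Qed.

Lemma brDl x y z : br (x + y) z = br x z + br y z.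
Proof. by rewrite -!adrE linearD. Qed.
Lemma brDr x y z : br x (y + z) = br x y + br x z.
Proof. by rewrite -!adlE linearD. Qed.
Lemma brZl (k : K) x z : br (k *: x) z = k *: br x z.
Proof. by rewrite -!adrE linearZ. Qed.
Lemma brZr (k : K) x z : br x (k *: z) = k *: br x z.
Proof. by rewrite -!adlE linearZ. Qed.
Lemma brNl x z : br (- x) z = - br x z.
Proof. by rewrite -!adrE linearN. Qed.
Lemma brNr x z : br x (- z) = - br x z.
Proof. by rewrite -!adlE linearN. Qed.
Lemma brBl x y z : br (x - y) z = br x z - br y z.
Proof. by rewrite -!adrE linearB. Qed.
Lemma brBr x y z : br x (y - z) = br x y - br x z.
Proof. by rewrite -!adlE linearB. Qed.
Lemma br0l z : br 0 z = 0.
Proof. by rewrite -!adrE linear0. Qed.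
Lemma br0r z : br z 0 = 0.
Proof. by rewrite -!adlE linear0. Qed.
Lemma brsuml I r (P : pred I) (F : I -> V) z :
  br (\sum_(i <- r | P i) F i) z = \sum_(i <- r | P i) br (F i) z.
Proof. rewrite -adrE linear_sum; apply: eq_bigr => i _; exact: adrE. Qed.
Lemma brsumr I r (P : pred I) (F : I -> V) z :
  br z (\sum_(i <- r | P i) F i) = \sum_(i <- r | P i) br z (F i).
Proof. rewrite -adlE linear_sum; apply: eq_bigr => i _; exact: adlE. Qed.
Lemma brA x y : br x y = - br y x.
Proof.
apply/eqP; rewrite -addr_eq0; have := Halt (x + y).
by rewrite brDl !brDr !Halt add0r addr0 => ->.
Qed.

Lemma lie_mem (A B : {vspace V}) x y : x \in A -> y \in B -> br x y \in lie_sp br A B.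
Proof.
move=> Ax By; rewrite (coord_vbasis Ax) (coord_vbasis By) brsuml.
apply: memv_suml => i _; rewrite brZl brsumr; apply: memvZ; apply: memv_suml => j _.
rewrite brZr; apply: memvZ; apply: memv_span; apply: allpairs_f; exact: memt_nth.
Qed.

Lemma lie_sub (A B W : {vspace V}) : (forall x y, x \in A -> y \in B -> br x y \in W) ->
  (lie_sp br A B <= W)%VS.
Proof.
move=> H; apply/span_subvP => z /allpairsP[[x y] [/= xA yB ->]].
by apply: H; apply: vbasis_mem.
Qed.


Lemma jac_re (A B C : V) : A - B + C = 0 -> B - C = A.
Proof.
move=> h; apply/eqP; rewrite -subr_eq0 -oppr_eq0 -h !opprB.
by rewrite addrA addrAC.
Qed.

Local Notation a := (lie_sp br fullv fullv).
Local Notation c := (lie_sp br fullv a).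
Hypothesis H2s : lie_sp br a a = 0%VS.
Hypothesis Hinf : (c <= lie_sp br fullv c)%VS.
Hypothesis H2 : (2%:R : K) != 0.

Lemma abel u v : u \in a -> v \in a -> br u v = 0.
Proof. by move=> Hu Hv; have := lie_mem Hu Hv; rewrite H2s memv0 => /eqP. Qed.
Lemma brxa x y : br x y \in a.
Proof. exact: lie_mem (memvf x) (memvf y). Qed.
Lemma brc x u : u \in a -> br x u \in c.
Proof. exact: lie_mem (memvf x). Qed.
Lemma ca : (c <= a)%VS.
Proof. by apply: lie_sub => x y _ _; apply: brxa. Qed.
Lemma abelc u v : u \in c -> v \in c -> br u v = 0.
Proof. by move=> Hu Hv; apply: abel; apply: (subvP ca). Qed.
Lemma comm_a x y u : u \in a -> br x (br y u) = br y (br x u).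
Proof.
move=> Hu; have := Hjac x y u.
rewrite (abel Hu (brxa x y)) addr0 (brA u x) brNr => /eqP; rewrite subr_eq0 => /eqP //.
Qed.

Local Notation n := (\dim (fullv : {vspace V})).
Local Notation e i := ((vbasis (fullv : {vspace V}))`_i).
Definition Tb i : 'End(V) := adl (e i).
Lemma TbE i v : Tb i v = br (e i) v. Proof. exact: adlE. Qed.

Lemma exS : exists S : nat -> 'End(V), [/\ forall i, (i < n)%N -> (S i @: c <= c)%VS,
     forall i C m, (i < n)%N -> (exists2 j, (j < n)%N & C = Tb j) -> m \in c -> S i (C m) = C (S i m) &
     forall m, m \in c -> \sum_(i < n) Tb i (S i m) = m].
Proof.
apply: KL.
- move=> C [j jn ->]; split.
    apply/subvP => _ /memv_imgP[m Mm ->]; rewrite TbE; apply: brc; exact: (subvP ca).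
  by move=> i m lt Mm; rewrite !TbE; apply: comm_a; apply: (subvP ca).
- by move=> i lt; exists i.
apply: subv_trans Hinf _; apply/span_subvP => z /allpairsP[[x y] [/= xA yB ->]].
have ilt : (index x (vbasis (fullv : {vspace V})) < n)%N.
  by rewrite -[X in (_ < X)%N](size_tuple (vbasis (fullv : {vspace V}))) index_mem.
apply: (subvP (sumv_sup (Ordinal ilt) _ (subvv _))) => //=.
rewrite -{1}(nth_index 0 xA) -TbE; apply: memv_img; exact: vbasis_mem.
Qed.


Section WithS.
Variable S : nat -> 'End(V).
Hypothesis S1 : forall i, (i < n)%N -> (S i @: c <= c)%VS.
Hypothesis S2 : forall i C m, (i < n)%N -> (exists2 j, (j < n)%N & C = Tb j) -> m \in c -> S i (C m) = C (S i m).
Hypothesis S3 : forall m, m \in c -> \sum_(i < n) Tb i (S i m) = m.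

Lemma Sc i m : (i < n)%N -> m \in c -> S i m \in c.
Proof. by move=> lt Mm; rewrite (subvP (S1 lt)) // memv_img. Qed.

Lemma Scomm i y m : (i < n)%N -> m \in c -> br y (S i m) = S i (br y m).
Proof.
move=> lt Mm; rewrite (coord_vbasis (memvf y)) !brsuml linear_sum; apply: eq_bigr => j _.
rewrite !brZl linearZ; congr (_ *: _).
have := @S2 i (Tb j) m lt (ex_intro2 _ _ (nat_of_ord j) (ltn_ord j) erefl) Mm.
by rewrite !TbE => h; exact: (esym h).
Qed.

Definition Pl : 'End(V) := \sum_(i < n) (S i \o Tb i)%VF.
Lemma PlE v : Pl v = \sum_(i < n) S i (br (e i) v).
Proof. by rewrite sum_lfunE; apply: eq_bigr => i _; rewrite comp_lfunE TbE. Qed.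

Lemma Pid m : m \in c -> Pl m = m.
Proof.
move=> Mm; rewrite PlE -[RHS](S3 Mm); apply: eq_bigr => i _.
by rewrite -TbE S2 //; exists i.
Qed.

Lemma Pcent v z : v \in a -> br z (Pl v) = br z v.
Proof.
move=> Va; rewrite PlE brsumr.
rewrite (eq_bigr (fun i : 'I_n => S i (br (e i) (br z v)))); last first.
  by move=> i _; rewrite Scomm ?brc // (comm_a z).
by rewrite -PlE Pid // brc.
Qed.

Definition pi : 'End(V) := (Pl \o projv a)%VF.
Lemma piE v : pi v = Pl (projv a v). Proof. exact: comp_lfunE. Qed.
Lemma pic v : pi v \in c.
Proof. by rewrite piE PlE; apply: memv_suml => i _; apply: Sc => //; apply: brc; apply: memv_proj. Qed.
Lemma piid m : m \in c -> pi m = m.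
Proof. by move=> Mm; rewrite piE projv_id ?Pid // (subvP ca). Qed.
Lemma pia u : u \in a -> pi u = Pl u.
Proof. by move=> Ua; rewrite piE projv_id. Qed.
Lemma pcent u z : u \in a -> br z (pi u) = br z u.
Proof. by move=> Ua; rewrite pia // Pcent. Qed.
Lemma pipi v : pi (pi v) = pi v.
Proof. exact: piid (pic v). Qed.

Definition D : 'End(V) := (\1 - pi)%VF.
Lemma DE v : D v = v - pi v.
Proof. by rewrite /D add_lfunE opp_lfunE id_lfunE. Qed.
Lemma Dc m : m \in c -> D m = 0.
Proof. by move=> Mm; rewrite DE piid // subrr. Qed.
Lemma piD v : pi (D v) = 0.
Proof. by rewrite DE linearB /= pipi subrr. Qed.
Lemma DD v : D (D v) = D v.
Proof. by rewrite {1}DE piD subr0. Qed.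
Lemma Da u : u \in a -> D u \in a.
Proof. by move=> Ua; rewrite DE memvB // (subvP ca) // pic. Qed.
Lemma Dcent u z : u \in a -> br z (D u) = 0.
Proof. by move=> Ua; rewrite DE brBr pcent // subrr. Qed.
Lemma Dcentl u z : u \in a -> br (D u) z = 0.
Proof. by move=> Ua; rewrite brA Dcent // oppr0. Qed.

Definition F : 'End(V) := \sum_(i < n) (S i \o pi \o Tb i)%VF.
Lemma FE z : F z = \sum_(i < n) S i (pi (br (e i) z)).
Proof. by rewrite sum_lfunE; apply: eq_bigr => i _; rewrite !comp_lfunE TbE. Qed.
Lemma Fc z : F z \in c.
Proof. by rewrite FE; apply: memv_suml => i _; apply: Sc => //; apply: pic. Qed.
Lemma F0 u : (forall x, br x u = 0) -> F u = 0.
Proof.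
move=> H; rewrite FE big1 // => i _; by rewrite H linear0 linear0.
Qed.

Lemma cob y z : br y (F z) - br z (F y) = pi (br y z).
Proof.
have Ex w t : br w (F t) = \sum_(i < n) S i (br w (br (e i) t)).
  rewrite FE brsumr; apply: eq_bigr => i _.
  by rewrite Scomm ?pic // pcent // brxa.
rewrite !Ex -sumrB pia ?brxa // PlE; apply: eq_bigr => i _.
rewrite -linearB /=; congr (S i _); apply: jac_re.
by have := Hjac (e i) y z; rewrite (brA z (e i)) brNr.
Qed.


Definition h : K := (2%:R)^-1.
Lemma hh (w : V) : h *: w + h *: w = w.
Proof. by rewrite -scalerDr -mulr2n -scaler_nat scalerA mulVf // scale1r. Qed.
Lemma swapZ (k l : K) (w : V) : k *: (l *: w) = l *: (k *: w).
Proof. by rewrite !scalerA mulrC. Qed.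

Definition Wl : 'End(V) := (F \o D + pi)%VF.
Notation Wf z := (Wl z).
Lemma WlE z : Wl z = F (D z) + pi z.
Proof. by rewrite add_lfunE comp_lfunE. Qed.
Lemma Wfc z : Wf z \in c.
Proof. by rewrite WlE memvD // ?Fc ?pic. Qed.
Lemma Wfa z : Wf z \in a.
Proof. exact: (subvP ca) (Wfc z). Qed.
Lemma Wflin (k : K) y z : Wf (k *: y + z) = k *: Wf y + Wf z.
Proof. exact: linearP. Qed.

Definition p x y := h *: D (br (D x) (D y)) + br (D x) (Wf y).

Lemma Dp x y : D (p x y) = h *: D (br (D x) (D y)).
Proof. by rewrite /p linearD linearZ /= DD (Dc (brc _ (Wfa y))) addr0. Qed.
Lemma pip x y : pi (p x y) = br (D x) (Wf y).
Proof. by rewrite /p linearD linearZ /= piD scaler0 add0r piid // brc // Wfa. Qed.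

Lemma pL x y z : p x (p y z) = br (D x) (br (D y) (Wf z)).
Proof.
rewrite {1}/p Dp brZr (Dcent _ (brxa _ _)) scaler0 linear0 scaler0 add0r.
rewrite [Wl (p y z)]WlE Dp linearZ /= F0 ?scaler0 ?add0r ?pip //.
by move=> t; apply: Dcent; apply: brxa.
Qed.

Lemma pR x y z : p (p x y) z = 0.
Proof.
by rewrite /p Dp !brZl !(Dcentl _ (brxa _ _)) !scaler0 linear0 scaler0 addr0.
Qed.

Lemma pA x y : p x y - p y x = br x y.
Proof.
rewrite /p (brA (D y) (D x)) linearN scalerN.
rewrite opprD opprK addrACA hh !WlE !brDr.
have -> : br (D x) (F (D y)) + br (D x) (pi y) - (br (D y) (F (D x)) + br (D y) (pi x)) =
  (br (D x) (F (D y)) - br (D y) (F (D x))) + (br (D x) (pi y) - br (D y) (pi x)).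
  by rewrite opprD addrACA.
rewrite cob addrA DE subrK.
have E1 : br (D x) (pi y) = br x (pi y) by rewrite DE brBl (abelc (pic x) (pic y)) subr0.
have E2 : br (D y) (pi x) = - br (pi x) y by rewrite DE brBl (abelc (pic y) (pic x)) subr0 brA.
have E3 : br (x - pi x) (y - pi y) = br x y - br x (pi y) - br (pi x) y.
  by rewrite brBl !brBr (abelc (pic x) (pic y)) subr0.
by rewrite E1 E2 !DE E3 opprK addrA addrAC subrK subrK.
Qed.

Lemma LR_ok : LR_structure br p.
Proof.
split.
- split=> k x y z.
    rewrite /p linearP /= !brDl !brZl linearP /= scalerDr (swapZ h k).
    by rewrite scalerDr addrACA.
  rewrite /p Wflin linearP /= !brDr !brZr linearP /= scalerDr (swapZ h k).
    by rewrite scalerDr addrACA.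
- by move=> x y z; rewrite !pL comm_a // Wfa.
- by move=> x y z; rewrite !pR.
- exact: pA.
Qed.

End WithS.

Lemma exLR : exists q : V -> V -> V, LR_structure br q.
Proof. by have [S [S1 S2 S3]] := exS; exists (p S); apply: LR_ok. Qed.

End LieMain.
Unset Implicit Arguments.
Theorem mainTheorem13 (K : fieldType) (V : vectType K) (br : V -> V -> V) :
  [pchar K] =i pred0 ->
  is_lie_bracket br ->
  two_step_solvable br ->
  lcs_inf_is br (lcs br 3) ->
  exists p : V -> V -> V, LR_structure br p.
Proof.
move=> Hch [[Hb1 Hb2] Halt Hjac] H2s Hinf.
have H2 : (2%:R : K) != 0 by move/pcharf0P: Hch => ->.
apply: (@exLR K V br Hb1 Hb2 Halt Hjac H2s _ H2).
apply/subvP => m Mm.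
by have := (Hinf m).1 Mm 4%N isT.
Qed.
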